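(* Let $R$ be a locally stable commutative ring. Then every stably free $R$-module is free; equivalently, for all $n$ and $a_1,\dots,a_n\in R$ with $a_1R+\cdots+a_nR=R$, the row $(a_1,\dots,a_n)$ is the first row of an invertible $n\times n$ matrix over $R$.
   Context: All rings are commutative with identity. An $R$-module $P$ is stably free if $P\oplus R^m\cong R^n$ for some $m,n\in\mathbb{N}$. A ring $S$ has stable range 1 if whenever $aS+bS=S$ there is $y\in S$ with $a+by$ a unit. $R$ is locally stable if whenever $a,b\in R$ with $aR+bR=R$ there is $y\in R$ such that $R/(a+by)R$ has stable range 1. *)

(* Defs.v *)
From HB Require Import structures.
From mathcomp Require Import all_boot all_order all_algebra.
Set Implicit Arguments. Unset Strict Implicit. Unset Printing Implicit Defensive.
Import GRing.Theory.
Local Open Scope ring_scope.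

(* Commutative rings with identity: R : comNzRingType (no decidable-unit
   structure is assumed, so units and invertible matrices are defined
   existentially). *)

Definition is_unit (R : comNzRingType) (x : R) : Prop := exists u : R, x * u = 1.

(* The quotient S = R/cR has stable range 1, written out in terms of R:
   a,b in S with aS + bS = S (i.e. a x + b y = 1 modulo cR) admit y with
   a + b y a unit of S (i.e. (a + b y) u = 1 modulo cR). *)
Definition quot_stable_range1 (R : comNzRingType) (c : R) : Prop :=
  forall a b : R,
    (exists x y z : R, a * x + b * y + c * z = 1) ->
    exists y : R, exists u z : R, (a + b * y) * u + c * z = 1.

Definition stable_range1 (R : comNzRingType) : Prop :=
  forall a b : R, (exists x y : R, a * x + b * y = 1) ->
    exists y : R, is_unit (a + b * y).

Definition locally_stable (R : comNzRingType) : Prop :=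
  forall a b : R, (exists x y : R, a * x + b * y = 1) ->
    exists y : R, quot_stable_range1 (a + b * y).

Definition lmod_iso (R : comNzRingType) (U V : lmodType R) : Prop :=
  exists f : U -> V, linear f /\ bijective f.

Definition stably_free (R : comNzRingType) (P : lmodType R) : Prop :=
  exists m n : nat, lmod_iso (P * 'rV[R]_m)%type 'rV[R]_n.

Definition free_module (R : comNzRingType) (P : lmodType R) : Prop :=
  exists k : nat, lmod_iso P 'rV[R]_k.

Definition unimodular (R : comNzRingType) (n : nat) (a : 'rV[R]_n) : Prop :=
  exists x : 'rV[R]_n, \sum_(i < n) a 0 i * x 0 i = 1.

Definition invertible_mx (R : comNzRingType) (n : nat) (A : 'M[R]_n) : Prop :=
  exists B : 'M[R]_n, A *m B = 1%:M /\ B *m A = 1%:M.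

(* Main.v *)
Require Import Defs.
From mathcomp Require Import all_boot all_order all_algebra.
From mathcomp Require Import ring.
Set Implicit Arguments. Unset Strict Implicit. Unset Printing Implicit Defensive.
Local Open Scope ring_scope.
Import GRing.Theory.

Definition o1 n : 'I_n.+2 := @Ordinal n.+2 1 erefl.
Lemma sum2 (R : comNzRingType) n (F : 'I_n.+2 -> R) :
  \sum_i F i = F ord0 + F (o1 n) + \sum_(i | (2 <= val i)%N) F i.
Proof.
rewrite (bigD1 ord0) //= (bigD1 (o1 n)) //= addrA; congr (_ + _).
by apply: eq_bigl => -[[|[|k]] Hk].
Qed.

Definition rsim (R : comNzRingType) n (a b : 'rV[R]_n) :=
  exists M : 'M[R]_n, invertible_mx M /\ a *m M = b.

Lemma rsim_trans (R : comNzRingType) n (a b c : 'rV[R]_n) :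
  rsim a b -> rsim b c -> rsim a c.
Proof.
move=> [M [[M' [h1 h2]] hM]] [N [[N' [k1 k2]] hN]].
exists (M *m N); split; last by rewrite mulmxA hM.
exists (N' *m M'); split.
  by rewrite mulmxA -(mulmxA M) k1 mulmx1 h1.
by rewrite mulmxA -(mulmxA N') h2 mulmx1 k2.
Qed.

Lemma rsim_sqz (R : comNzRingType) n (a : 'rV[R]_n) (N : 'M[R]_n) :
  (forall i j k, N i j * N j k = 0) -> rsim a (a + a *m N).
Proof.
move=> hN.
have NN : N *m N = 0.
  by apply/matrixP => i k; rewrite !mxE big1 // => j _; apply: hN.
exists (1%:M + N); split; last by rewrite mulmxDr mulmx1.
exists (1%:M - N); split.
  by rewrite mulmxDl mul1mx mulmxBr mulmx1 NN subr0 subrK.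
by rewrite mulmxBl mul1mx mulmxDr mulmx1 NN addr0 addrK.
Qed.

Lemma rsim_block (R : comNzRingType) n (c d z u : R) :
  d * u + c * z = 1 ->
  rsim (\row_(j < n.+2) (if val j == 0%N then c else if val j == 1%N then d else 0))
       (delta_mx 0 ord0).
Proof.
move=> H.
pose M := \matrix_(i < n.+2, j < n.+2)
  (if val i == 0%N then (if val j == 0%N then z else if val j == 1%N then -d else 0)
   else if val i == 1%N then (if val j == 0%N then u else if val j == 1%N then c else 0)
   else (i == j)%:R).
pose Mi := \matrix_(i < n.+2, j < n.+2)
  (if val i == 0%N then (if val j == 0%N then c else if val j == 1%N then d else 0)
   else if val i == 1%N then (if val j == 0%N then -u else if val j == 1%N then z else 0)
   else (i == j)%:R).
exists M; split.
  exists Mi; split.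
        apply/matrixP => i j; rewrite !mxE sum2 !mxE /=;
      case: i => [[|[|i]] Hi]; case: j => [[|[|j]] Hj] /=;
      try (rewrite big1; [ rewrite ?addr0; try ring; rewrite -H; ring
             | move=> [[|[|k]] Hk] //= _; rewrite !mxE /=;
               by rewrite ?mul0r ?mulr0]);
      rewrite (bigD1 (Ordinal Hi)) //= big1 ?addr0 ?add0r ?mul0r;
      [ by rewrite !add0r !mxE /= eqxx mul1r
      | move=> [[|[|k]] Hk] /andP[//= _ hk]; rewrite !mxE /=;
        by rewrite eq_sym (negbTE hk) mul0r].
      apply/matrixP => i j; rewrite !mxE sum2 !mxE /=;
      case: i => [[|[|i]] Hi]; case: j => [[|[|j]] Hj] /=;
      try (rewrite big1; [ rewrite ?addr0; try ring; rewrite -H; ring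
             | move=> [[|[|k]] Hk] //= _; rewrite !mxE /=;
               by rewrite ?mul0r ?mulr0]);
      rewrite (bigD1 (Ordinal Hi)) //= big1 ?addr0 ?add0r ?mul0r;
      [ by rewrite !add0r !mxE /= eqxx mul1r
      | move=> [[|[|k]] Hk] /andP[//= _ hk]; rewrite !mxE /=;
        by rewrite eq_sym (negbTE hk) mul0r].
apply/matrixP => i j; rewrite !mxE sum2 !mxE /=.
rewrite big1 ?addr0.
  case: j => [[|[|j]] Hj] /=; rewrite ?mxE /=.
  - by rewrite [i]ord1 eqxx -[Ordinal Hj == ord0]/true /= -H; ring.
  - by rewrite [i]ord1 eqxx -[Ordinal Hj == ord0]/false /=; ring.
  - by rewrite [i]ord1 eqxx -[Ordinal Hj == ord0]/false /=; ring.
move=> [[|[|k]] Hk] //= _; rewrite !mxE /= mul0r //.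
Qed.

Lemma main2 (R : comNzRingType) (hR : locally_stable R) n (a x : 'rV[R]_n.+2) :
  \sum_i a 0 i * x 0 i = 1 -> rsim a (delta_mx 0 ord0).
Proof.
move=> Hsum.
set b := \sum_(i | (2 <= val i)%N) a 0 i * x 0 i.
have Hs : a 0 ord0 * x 0 ord0 + a 0 (o1 n) * x 0 (o1 n) + b = 1 by rewrite -sum2.
have [y hc] : exists y, quot_stable_range1 (a 0 ord0 + (a 0 (o1 n) * x 0 (o1 n) + b) * y).
  by apply: hR; exists (x 0 ord0), 1; rewrite mulr1 addrA.
set c := a 0 ord0 + (a 0 (o1 n) * x 0 (o1 n) + b) * y in hc.
have [t [u [z Hu]]] : exists t u z, (a 0 (o1 n) + b * t) * u + c * z = 1.
  apply: hc; exists (x 0 (o1 n) * (1 - y * x 0 ord0)), (1 - y * x 0 ord0), (x 0 ord0).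
  rewrite -[RHS]Hs /c; ring.
set d := a 0 (o1 n) + b * t in Hu.
pose N1 := \matrix_(i < n.+2, j < n.+2)
  (if (val j == 0%N) && (val i != 0%N) then x 0 i * y else 0).
pose r1 := \row_(j < n.+2) (if val j == 0%N then c else a 0 j).
have s1 : rsim a r1.
  have <- : a + a *m N1 = r1.
    apply/matrixP => i j; rewrite [i]ord1 !mxE.
    under eq_bigr => k _ do rewrite !mxE.
    case: j => [[|j] Hj] /=.
      rewrite sum2 /= mulr0 add0r.
      rewrite (eq_bigr (fun k => a 0 k * x 0 k * y)); last first.
        by move=> [[|[|k]] Hk] //= _; rewrite mulrA.
      rewrite (_ : Ordinal Hj = ord0); last exact: val_inj.
      by rewrite /c /b !mulrDl big_distrl /= mulrA.
    by rewrite big1 ?addr0 // => k _; rewrite mulr0.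
  apply: rsim_sqz => i j k; rewrite !mxE.
  by case: j => [[|j] Hj]; rewrite /= ?andbF ?mulr0 ?mul0r.
pose N2 := \matrix_(i < n.+2, j < n.+2)
  (if (val j == 1%N) && (2 <= val i)%N then x 0 i * t else 0).
pose r2 := \row_(j < n.+2) (if val j == 0%N then c else if val j == 1%N then d else a 0 j).
have s2 : rsim r1 r2.
  have <- : r1 + r1 *m N2 = r2.
    apply/matrixP => i j; rewrite [i]ord1 !mxE.
    under eq_bigr => k _ do rewrite !mxE.
    case: j => [[|[|j]] Hj] /=.
    - by rewrite big1 ?addr0 // => k _; rewrite mulr0.
    - rewrite sum2 /= !mulr0 !add0r.
      rewrite (eq_bigr (fun k => a 0 k * x 0 k * t)); last first.
        by move=> [[|[|k]] Hk] //= _; rewrite mulrA.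
      rewrite (_ : Ordinal Hj = o1 n); last exact: val_inj.
      by rewrite /d /b big_distrl.
    - by rewrite big1 ?addr0 // => k _; rewrite mulr0.
  apply: rsim_sqz => i j k; rewrite !mxE.
  by case: j => [[|[|j]] Hj]; rewrite /= ?andbF ?mulr0 ?mul0r.
pose N3 := \matrix_(i < n.+2, j < n.+2)
  (if (2 <= val j)%N then
     (if val i == 0%N then - (a 0 j * z) else if val i == 1%N then - (a 0 j * u) else 0)
   else 0).
pose r3 := \row_(j < n.+2) (if val j == 0%N then c else if val j == 1%N then d else 0).
have s3 : rsim r2 r3.
  have <- : r2 + r2 *m N3 = r3.
    apply/matrixP => i j; rewrite [i]ord1 !mxE.
    under eq_bigr => k _ do rewrite !mxE.
    case: j => [[|[|j]] Hj] /=.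
    - by rewrite big1 ?addr0 // => k _; rewrite mulr0.
    - by rewrite big1 ?addr0 // => k _; rewrite mulr0.
    - rewrite sum2 /= big1 ?addr0; last first.
        by move=> [[|[|k]] Hk] //= _; rewrite mulr0.
      transitivity (a 0 (Ordinal Hj) * (1 - (d * u + c * z))); first ring.
      by rewrite Hu subrr mulr0.
  apply: rsim_sqz => i j k; rewrite !mxE.
  by case: j => [[|[|j]] Hj]; rewrite /= ?if_same ?mulr0 ?mul0r.
apply: rsim_trans s1 _; apply: rsim_trans s2 _; apply: rsim_trans s3 _.
exact: (@rsim_block R n c d z u Hu).
Qed.

Lemma part2 (R : comNzRingType) (hR : locally_stable R) n (a : 'rV[R]_n.+1) :
  unimodular a -> exists A : 'M[R]_n.+1, invertible_mx A /\ row 0 A = a.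
Proof.
move=> [x hx].
have : rsim a (delta_mx 0 ord0).
  case: n a x hx => [|n] a x hx; last exact: (main2 hR hx).
  rewrite big_ord1 in hx.
  exists (x 0 0)%:M; split.
    exists (a 0 0)%:M; split; rewrite -scalar_mxM.
      by rewrite mulrC hx.
    by rewrite hx.
  apply/matrixP => i j; rewrite [i]ord1 [j]ord1 mul_mx_scalar !mxE /=.
  by rewrite mulrC hx.
move=> [M [[B [h1 h2]] hM]]; exists B; split; first by exists M.
by rewrite rowE -hM -mulmxA h1 mulmx1.
Qed.


Lemma linD (R : comNzRingType) (U V : lmodType R) (f : U -> V) :
  linear f -> forall u v, f (u + v) = f u + f v.
Proof. by move=> lf u v; rewrite -{1}[u]scale1r lf scale1r. Qed.

Lemma lin0 (R : comNzRingType) (U V : lmodType R) (f : U -> V) :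
  linear f -> f 0 = 0.
Proof.
move=> lf; apply: (addrI (f 0)); by rewrite addr0 -linD // addr0.
Qed.

Lemma linZ (R : comNzRingType) (U V : lmodType R) (f : U -> V) :
  linear f -> forall a u, f (a *: u) = a *: f u.
Proof. by move=> lf a u; rewrite -[a *: u]addr0 lf lin0 // addr0. Qed.

Lemma linN (R : comNzRingType) (U V : lmodType R) (f : U -> V) :
  linear f -> forall u, f (- u) = - f u.
Proof. by move=> lf u; rewrite -scaleN1r linZ // scaleN1r. Qed.

Lemma linB (R : comNzRingType) (U V : lmodType R) (f : U -> V) :
  linear f -> forall u v, f (u - v) = f u - f v.
Proof. by move=> lf u v; rewrite linD // linN. Qed.

Lemma lin_sum (R : comNzRingType) (U V : lmodType R) (f : U -> V) n (F : 'I_n -> U) :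
  linear f -> f (\sum_i F i) = \sum_i f (F i).
Proof. move=> lf; apply: (big_morph f); [exact: linD | exact: lin0]. Qed.

Lemma lin_inv (R : comNzRingType) (U V : lmodType R) (f : U -> V) g :
  linear f -> cancel f g -> cancel g f -> linear g.
Proof.
move=> lf fK gK a u v; apply: (can_inj fK); by rewrite lf !gK.
Qed.

Lemma lin_comp (R : comNzRingType) (U V W : lmodType R) (f : U -> V) (g : V -> W) :
  linear f -> linear g -> linear (fun x => g (f x)).
Proof. by move=> lf lg a u v; rewrite lf lg. Qed.

Lemma iso_sym (R : comNzRingType) (U V : lmodType R) :
  lmod_iso U V -> lmod_iso V U.
Proof.
move=> [f [lf [g fK gK]]]; exists g; split; first exact: lin_inv lf fK gK.
by exists f.
Qed.

Lemma iso_trans (R : comNzRingType) (U V W : lmodType R) :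
  lmod_iso U V -> lmod_iso V W -> lmod_iso U W.
Proof.
move=> [f [lf bf]] [g [lg bg]]; exists (fun x => g (f x)); split.
  exact: lin_comp.
exact: bij_comp.
Qed.

Lemma peel (R : comNzRingType) (hR : locally_stable R) (Q : lmodType R) n
  (g : Q * 'rV[R]_1 -> 'rV[R]_n) : linear g -> bijective g ->
  exists k, lmod_iso Q 'rV[R]_k.
Proof.
case: n g => [|n] g lg [h gK hK]; have lh := lin_inv lg gK hK.
  exfalso; have := gK (0, 1%:M); rewrite (thinmx0 (g _)) lin0 // => -[] /matrixP/(_ 0 0).
  by rewrite !mxE eqxx /= => /eqP; rewrite eq_sym oner_eq0.
set v := g (0, 1%:M).
have hv : h v = (0, 1%:M) by rewrite /v gK.
pose phi w := (h w).2.
have lphi : linear phi by move=> a u w; rewrite /phi lh.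
have phiv : phi v 0 0 = 1 by rewrite /phi hv /= mxE eqxx.
pose x := \row_i phi (delta_mx 0 i) 0 0.
have sum1 : \sum_i v 0 i * x 0 i = 1.
  rewrite -phiv {2}(row_sum_delta v) lin_sum // summxE.
  by apply: eq_bigr => i _; rewrite linZ // !mxE.
have [A [[B [AB BA]] rA]] := part2 hR (ex_intro _ x sum1).
pose psi (w : 'rV[R]_n.+1) := h (w *m A).
pose psiI (q : Q * 'rV[R]_1) := g q *m B.
have psiK : cancel psi psiI by move=> w; rewrite /psi /psiI hK -mulmxA AB mulmx1.
have psiIK : cancel psiI psi by move=> q; rewrite /psi /psiI -mulmxA BA mulmx1 gK.
have lpsi : linear psi by move=> a u w; rewrite /psi mulmxDl -scalemxAl lh.
have Ee : row_mx (1%:M : 'rV[R]_1) (0 : 'rV[R]_n) = delta_mx 0 ord0.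
  apply/matrixP => i j; rewrite [i]ord1 !mxE; case: splitP => k hk.
    move: hk; rewrite [k]ord1 !mxE eqxx => hk.
    by have -> : j == ord0 by rewrite -val_eqE /= hk.
  rewrite !mxE; have /negbTE-> : j != ord0 by rewrite -val_eqE /= hk.
  by [].
have psiE : forall s : 'rV[R]_1, psi (row_mx s (0 : 'rV[R]_n)) = (0, s).
  move=> s; have -> : row_mx s (0 : 'rV[R]_n) = s 0 0 *: row_mx (1%:M : 'rV[R]_1) 0.
    by rewrite scale_row_mx scaler0 scalemx1 -mx11_scalar.
  rewrite Ee linZ // /psi -rowE rA hv /=.
    by apply: (congr2 pair); [exact: scaler0 | rewrite scalemx1 -mx11_scalar].
pose F (w : 'rV[R]_n) := (psi (row_mx (0 : 'rV[R]_1) w)).1.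
pose G (q : Q) := rsubmx (psiI (q, 0) : 'rV[R]_(1 + n)).
have GK : cancel G F.
  move=> q; rewrite /F /G; set s := (psiI (q, 0) : 'rV[R]_(1 + n)).
  have e : row_mx (0 : 'rV[R]_1) (rsubmx s) = s - row_mx (lsubmx s) 0.
    by rewrite -{2}(hsubmxK s) opp_row_mx add_row_mx subrr oppr0 addr0.
  by rewrite e linB // psiE /s psiIK /= subr0.
have FK : cancel F G.
  move=> w; rewrite /G /F; set p := psi (row_mx (0 : 'rV[R]_1) w).
  have e : (p.1, 0) = psi (row_mx (- p.2) w).
    have -> : row_mx (- p.2) w = row_mx 0 w - row_mx p.2 0.
      by rewrite opp_row_mx add_row_mx oppr0 addr0 add0r.
    rewrite linB // psiE -/p; case: p => p1 p2 /=.
    by apply: (congr2 pair); rewrite ?subrr ?subr0.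
  by rewrite e psiK row_mxKr.
have lF : linear F.
  move=> a u w; rewrite /F.
  have -> : row_mx (0 : 'rV[R]_1) (a *: u + w) = a *: row_mx 0 u + row_mx 0 w.
    by rewrite scale_row_mx add_row_mx scaler0 addr0.
  by rewrite lpsi.
exists n, G; split; first exact: lin_inv lF FK GK.
by exists F.
Qed.

Lemma sf_free (R : comNzRingType) (hR : locally_stable R) m :
  forall n (P : lmodType R), lmod_iso (P * 'rV[R]_m)%type 'rV[R]_n -> free_module P.
Proof.
elim: m => [|m IH] n P iso.
  exists n; apply: iso_trans iso.
  exists (fun p : P => (p, 0 : 'rV[R]_0)); split.
    by move=> a u v; apply: (congr2 pair) => //; symmetry; apply: thinmx0.
  exists (fun x : P * 'rV[R]_0 => x.1) => // -[p w] /=.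
  by rewrite (thinmx0 w).
have iso2 : lmod_iso ((P * 'rV[R]_m) * 'rV[R]_1)%type (P * 'rV[R]_m.+1)%type.
  exists (fun x : (P * 'rV[R]_m) * 'rV[R]_1 => (x.1.1, (row_mx x.2 x.1.2 : 'rV[R]_(1 + m)))).
  split.
    move=> a [[p1 w1] s1] [[p2 w2] s2] /=; apply: (congr2 pair) => //.
    by apply/matrixP => i j; rewrite /= !mxE; case: splitP => k _; rewrite !mxE.
  exists (fun y : P * 'rV[R]_(1 + m) => ((y.1, rsubmx y.2), lsubmx y.2)).
    by move=> [[p w] s] /=; rewrite row_mxKl row_mxKr.
  by move=> [p v] /=; rewrite hsubmxK.
have [g [lg bg]] := iso_trans iso2 iso.
have [k isok] := peel hR lg bg.
exact: IH isok.
Qed.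

Theorem proposition4p5 (R : comNzRingType) (hR : locally_stable R) :
  (forall P : lmodType R, stably_free P -> free_module P) /\
  (forall (n : nat) (a : 'rV[R]_n.+1), unimodular a ->
     exists A : 'M[R]_n.+1, invertible_mx A /\ row 0 A = a).
Proof.
split; last exact: part2.
by move=> P [m [n iso]]; exact: sf_free iso.
Qed.
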